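(* Let $\mathbf{U}$ be the $6\times 6$ matrix $$\mathbf{U}=\begin{pmatrix} 0 & -3 & 1 & -1 & -1 & -1 \\ 1 & 0 & -3 & -1 & -1 & -1 \\ -3 & 1 & 0 & -1 & -1 & -1 \\ -4 & -4 & 3 & 0 & -5 & 1 \\ -1 & -1 & -3 & 1 & 0 & -5 \\ -1 & -1 & -3 & -5 & 1 & 0 \end{pmatrix}$$ and consider the symmetric two-player game in which the row player's payoff matrix is $\mathbf{U}$ and the column player's payoff matrix is $\mathbf{U}^T$. This game has a unique Nash equilibrium (symmetric or not), namely $(\mathbf{n}_{123},\mathbf{n}_{123})$ with $\mathbf{n}_{123}=(1/3,1/3,1/3,0,0,0)$.
   Context: In the symmetric game, a mixed strategy is an element of the simplex $S_6=\{\mathbf{x}\in\mathbb{R}_+^6:\sum_i x_i=1\}$; when the row player plays $\mathbf{x}$ and the column player plays $\mathbf{y}$, the row player gets $\mathbf{x}\cdot\mathbf{U}\mathbf{y}$ and the column player gets $\mathbf{y}\cdot\mathbf{U}\mathbf{x}$. A Nash equilibrium is a pair $(\mathbf{x},\mathbf{y})$ of mixed strategies, each a best reply to the other. *)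

(* Defs.v *)
From mathcomp Require Import all_boot all_order all_algebra.
Set Implicit Arguments. Unset Strict Implicit. Unset Printing Implicit Defensive.
Import Order.TTheory GRing.Theory Num.Theory.
Local Open Scope ring_scope.

(* The 6x6 payoff matrix U (rows i, columns j, 0-indexed). *)
Definition Ulist : seq (seq int) :=
  [:: [:: 0; -3; 1; -1; -1; -1];
      [:: 1; 0; -3; -1; -1; -1];
      [:: -3; 1; 0; -1; -1; -1];
      [:: -4; -4; 3; 0; -5; 1];
      [:: -1; -1; -3; 1; 0; -5];
      [:: -1; -1; -3; -5; 1; 0]]%Z.

Definition Umx (R : realFieldType) : 'M[R]_6 :=
  \matrix_(i < 6, j < 6) ((nth [::] Ulist i)`_j)%:~R.

Definition mixed_strategy (R : realFieldType) (x : 'cV[R]_6) : Prop :=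
  (forall i, 0 <= x i 0) /\ \sum_(i < 6) x i 0 = 1.

Definition payoff (R : realFieldType) (A : 'M[R]_6) (x y : 'cV[R]_6) : R :=
  \sum_(i < 6) x i 0 * (A *m y) i 0.

(* Row player's payoff: x.Uy ; column player's payoff: y.Ux. *)
Definition is_Nash (R : realFieldType) (U : 'M[R]_6) (x y : 'cV[R]_6) : Prop :=
  mixed_strategy x /\ mixed_strategy y /\
  (forall x', mixed_strategy x' -> payoff U x' y <= payoff U x y) /\
  (forall y', mixed_strategy y' -> payoff U y' x <= payoff U y x).

Definition n123 (R : realFieldType) : 'cV[R]_6 :=
  \col_(i < 6) (if (i < 3)%N then 3^-1 else 0).

(* Main.v *)
Require Import Defs.
From mathcomp Require Import all_boot all_order all_algebra.
From mathcomp Require Import lra.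
Import Order.TTheory GRing.Theory Num.Theory.
Local Open Scope ring_scope.

Lemma core (R : realFieldType) (x0 x1 x2 x3 x4 x5 y0 y1 y2 y3 y4 y5 v w : R)
  (Hx0 : 0 <= x0)
  (Hx1 : 0 <= x1)
  (Hx2 : 0 <= x2)
  (Hx3 : 0 <= x3)
  (Hx4 : 0 <= x4)
  (Hx5 : 0 <= x5)
  (Sx : x0 + x1 + x2 + x3 + x4 + x5 = 1)
  (Hy0 : 0 <= y0)
  (Hy1 : 0 <= y1)
  (Hy2 : 0 <= y2)
  (Hy3 : 0 <= y3)
  (Hy4 : 0 <= y4)
  (Hy5 : 0 <= y5)
  (Sy : y0 + y1 + y2 + y3 + y4 + y5 = 1)
  (Lx0 : (-3) * y1 + 1 * y2 + (-1) * y3 + (-1) * y4 + (-1) * y5 <= v)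
  (Cx0 : x0 = 0 \/ (-3) * y1 + 1 * y2 + (-1) * y3 + (-1) * y4 + (-1) * y5 = v)
  (Lx1 : 1 * y0 + (-3) * y2 + (-1) * y3 + (-1) * y4 + (-1) * y5 <= v)
  (Cx1 : x1 = 0 \/ 1 * y0 + (-3) * y2 + (-1) * y3 + (-1) * y4 + (-1) * y5 = v)
  (Lx2 : (-3) * y0 + 1 * y1 + (-1) * y3 + (-1) * y4 + (-1) * y5 <= v)
  (Cx2 : x2 = 0 \/ (-3) * y0 + 1 * y1 + (-1) * y3 + (-1) * y4 + (-1) * y5 = v)
  (Lx3 : (-4) * y0 + (-4) * y1 + 3 * y2 + (-5) * y4 + 1 * y5 <= v)
  (Cx3 : x3 = 0 \/ (-4) * y0 + (-4) * y1 + 3 * y2 + (-5) * y4 + 1 * y5 = v)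
  (Lx4 : (-1) * y0 + (-1) * y1 + (-3) * y2 + 1 * y3 + (-5) * y5 <= v)
  (Cx4 : x4 = 0 \/ (-1) * y0 + (-1) * y1 + (-3) * y2 + 1 * y3 + (-5) * y5 = v)
  (Lx5 : (-1) * y0 + (-1) * y1 + (-3) * y2 + (-5) * y3 + 1 * y4 <= v)
  (Cx5 : x5 = 0 \/ (-1) * y0 + (-1) * y1 + (-3) * y2 + (-5) * y3 + 1 * y4 = v)
  (Ly0 : (-3) * x1 + 1 * x2 + (-1) * x3 + (-1) * x4 + (-1) * x5 <= w)
  (Cy0 : y0 = 0 \/ (-3) * x1 + 1 * x2 + (-1) * x3 + (-1) * x4 + (-1) * x5 = w)
  (Ly1 : 1 * x0 + (-3) * x2 + (-1) * x3 + (-1) * x4 + (-1) * x5 <= w)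
  (Cy1 : y1 = 0 \/ 1 * x0 + (-3) * x2 + (-1) * x3 + (-1) * x4 + (-1) * x5 = w)
  (Ly2 : (-3) * x0 + 1 * x1 + (-1) * x3 + (-1) * x4 + (-1) * x5 <= w)
  (Cy2 : y2 = 0 \/ (-3) * x0 + 1 * x1 + (-1) * x3 + (-1) * x4 + (-1) * x5 = w)
  (Ly3 : (-4) * x0 + (-4) * x1 + 3 * x2 + (-5) * x4 + 1 * x5 <= w)
  (Cy3 : y3 = 0 \/ (-4) * x0 + (-4) * x1 + 3 * x2 + (-5) * x4 + 1 * x5 = w)
  (Ly4 : (-1) * x0 + (-1) * x1 + (-3) * x2 + 1 * x3 + (-5) * x5 <= w)
  (Cy4 : y4 = 0 \/ (-1) * x0 + (-1) * x1 + (-3) * x2 + 1 * x3 + (-5) * x5 = w)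
  (Ly5 : (-1) * x0 + (-1) * x1 + (-3) * x2 + (-5) * x3 + 1 * x4 <= w)
  (Cy5 : y5 = 0 \/ (-1) * x0 + (-1) * x1 + (-3) * x2 + (-5) * x3 + 1 * x4 = w) :
  x0 = 3^-1 /\ x1 = 3^-1 /\ x2 = 3^-1 /\ x3 = 0 /\ x4 = 0 /\ x5 = 0 /\ y0 = 3^-1 /\ y1 = 3^-1 /\ y2 = 3^-1 /\ y3 = 0 /\ y4 = 0 /\ y5 = 0.
Proof.
(case: Cx3 => Cx3; [ (case: Cx4 => Cx4; [ (case: Cx5 => Cx5; [ (case: Cy3 => Cy3; [ (case: Cy4 => Cy4; [ (case: Cy5 => Cy5; [ (case: Cx0 => Cx0; [ (case: Cx1 => Cx1; [ (case: Cx2 => Cx2; [ (clear -Sx Cx3 Cx4 Cx5 Cx0 Cx1 Cx2; exfalso; lra) | (case: Cy0 => Cy0; [ (case: Cy1 => Cy1; [ (clear -Sy Lx3 Cy3 Cy4 Cy5 Cx2 Cy0 Cy1; exfalso; lra) | (clear -Sx Ly3 Cx3 Cx4 Cx5 Cx0 Cx1 Cy1; exfalso; lra) ]) | (clear -Sx Ly3 Cx3 Cx4 Cx0 Cx1 Cy0; exfalso; lra) ]) ]) | (case: Cx2 => Cx2; [ (case: Cy0 => Cy0; [ (clear -Hy2 Sy Lx2 Cy3 Cy4 Cy5 Cx1 Cy0; exfalso; lra) | (clear -Sx Ly5 Cx3 Cx5 Cx0 Cx2 Cy0; exfalso; lra) ]) | (case: Cy0 => Cy0; [ (clear -Hy2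 Sy Cy3 Cy4 Cy5 Cx1 Cx2 Cy0; exfalso; lra) | (clear -Sx Ly2 Ly3 Cx3 Cx4 Cx5 Cx0 Cy0; exfalso; lra) ]) ]) ]) | (case: Cx1 => Cx1; [ (case: Cx2 => Cx2; [ (case: Cy0 => Cy0; [ (clear -Sy Lx2 Lx3 Cy3 Cy4 Cy5 Cx0 Cy0; exfalso; lra) | (clear -Sx Ly1 Cx3 Cx4 Cx5 Cx1 Cx2 Cy0; exfalso; lra) ]) | (case: Cy0 => Cy0; [ (clear -Sy Lx3 Cy3 Cy4 Cy5 Cx0 Cx2 Cy0; exfalso; lra) | (case: Cy1 => Cy1; [ (clear -Sy Lx3 Cy3 Cy4 Cy5 Cx0 Cx2 Cy1; exfalso; lra) | (case: Cy2 => Cy2; [ (clear -Sy Lx5 Cy3 Cy4 Cy5 Cx0 Cx2 Cy2; exfalso; lra) | (clear -Sx Cx3 Cx4 Cx5 Cx1 Cy0 Cy1 Cy2; exfalso; lra) ]) ]) ]) ]) | (case: Cx2 => Cx2; [ (case: Cy0 => Cy0; [ (clear -Sy Lx3 Cy3 Cy4 Cy5 Cx0 Cx1 Cy0; exfalso; lra) | (clear -Hx1 Sx Ly1 Cx3 Cx4 Cx5 Cx2 Cy0; exfalso; lra) ]) | (case: Cy0 => Cy0; [ (clear -Sy Cy3 Cy4 Cy5 Cx0 Cx1 Cx2 Cy0; exfalso; lra) | (case: Cy1 => Cy1; [ (clear -Sy Cy3 Cy4 Cy5 Cx0 Cx1 Cx2 Cy1; exfalso; lra) | (case: Cy2 =>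 Cy2; [ (clear -Sy Cy3 Cy4 Cy5 Cx0 Cx1 Cx2 Cy2; exfalso; lra) | (do 11! (split; first lra); lra) ]) ]) ]) ]) ]) ]) | (clear -Sx Ly1 Ly2 Ly3 Cx3 Cx4 Cx5 Cy5; exfalso; lra) ]) | (clear -Sx Ly1 Ly2 Ly3 Cx3 Cx4 Cx5 Cy4; exfalso; lra) ]) | (case: Cy4 => Cy4; [ (case: Cy5 => Cy5; [ (case: Cx0 => Cx0; [ (case: Cx1 => Cx1; [ (case: Cx2 => Cx2; [ (clear -Sx Cx3 Cx4 Cx5 Cx0 Cx1 Cx2; exfalso; lra) | (case: Cy0 => Cy0; [ (case: Cy1 => Cy1; [ (clear -Sy Lx3 Lx4 Cy4 Cy5 Cx2 Cy0 Cy1; exfalso; lra) | (clear -Sx Cx3 Cx4 Cx5 Cy3 Cx0 Cx1 Cy1; exfalso; lra) ]) | (clear -Sx Cx3 Cx4 Cy3 Cx0 Cx1 Cy0; exfalso; lra) ]) ]) | (case: Cx2 => Cx2; [ (clear -Sx Ly5 Cx3 Cx4 Cx5 Cy3 Cx2; exfalso; lra) | (case: Cy0 => Cy0; [ (clear -Hy2 Sy Lx4 Cy4 Cy5 Cx1 Cx2 Cy0; exfalso; lra) | (clear -Sx Ly2 Cx3 Cx4 Cx5 Cy3 Cx0 Cy0; exfalso; lra) ]) ]) ]) | (case: Cx1 => Cx1; [ (case: Cx2 => Cx2; [ (clear -Sx Ly5 Cx3 Cx4 Cx5 Cy3 Cx2; exfalso; lra) | (case: Cy0 => Cy0; [ (clear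 -Sy Lx3 Lx4 Cy4 Cy5 Cx0 Cx2 Cy0; exfalso; lra) | (case: Cy1 => Cy1; [ (clear -Sy Lx3 Lx4 Cy4 Cy5 Cx0 Cx2 Cy1; exfalso; lra) | (clear -Sx Cx3 Cx4 Cx5 Cy3 Cx1 Cy0 Cy1; exfalso; lra) ]) ]) ]) | (case: Cx2 => Cx2; [ (clear -Sx Ly5 Cx3 Cx4 Cx5 Cy3 Cx2; exfalso; lra) | (case: Cy0 => Cy0; [ (clear -Sy Lx4 Cy4 Cy5 Cx0 Cx1 Cx2 Cy0; exfalso; lra) | (case: Cy1 => Cy1; [ (clear -Sy Lx4 Cy4 Cy5 Cx0 Cx1 Cx2 Cy1; exfalso; lra) | (clear -Sx Ly2 Cx3 Cx4 Cx5 Cy3 Cy0 Cy1; exfalso; lra) ]) ]) ]) ]) ]) | (clear -Sx Ly1 Ly2 Cx3 Cx4 Cx5 Cy3 Cy5; exfalso; lra) ]) | (clear -Sx Ly1 Ly2 Cx3 Cx4 Cx5 Cy3 Cy4; exfalso; lra) ]) ]) | (case: Cy3 => Cy3; [ (case: Cy4 => Cy4; [ (case: Cy5 => Cy5; [ (clear -Sy Lx1 Lx2 Lx3 Cx5 Cy3 Cy4 Cy5; exfalso; lra) | (case: Cx0 => Cx0; [ (case: Cx1 => Cx1; [ (clear -Hx2 Sx Ly3 Cx3 Cx4 Cy5 Cx0 Cx1; exfalso; lra) | (case: Cx2 => Cx2; [ (case: Cy0 => Cy0; [ (clear -Hy2 Sy Lx2 Cx5 Cy3 Cy4 Cx1 Cy0;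 exfalso; lra) | (clear -Sx Ly3 Cx3 Cx4 Cy5 Cx0 Cx2 Cy0; exfalso; lra) ]) | (case: Cy0 => Cy0; [ (clear -Hy2 Sy Cx5 Cy3 Cy4 Cx1 Cx2 Cy0; exfalso; lra) | (clear -Sx Ly2 Ly3 Cx3 Cx4 Cy5 Cx0 Cy0; exfalso; lra) ]) ]) ]) | (clear -Hy1 Sy Lx1 Lx3 Cx5 Cy3 Cy4 Cx0; exfalso; lra) ]) ]) | (clear -Hx5 Sx Ly1 Ly2 Ly3 Cx3 Cx4 Cy4; exfalso; lra) ]) | (case: Cy4 => Cy4; [ (case: Cy5 => Cy5; [ (clear -Hy3 Sy Lx1 Lx2 Lx3 Cx5 Cy4 Cy5; exfalso; lra) | (case: Cx0 => Cx0; [ (case: Cx1 => Cx1; [ (clear -Hx2 Sx Cx3 Cx4 Cy3 Cy5 Cx0 Cx1; exfalso; lra) | (case: Cx2 => Cx2; [ (case: Cy0 => Cy0; [ (clear -Hy2 Sy Lx2 Lx3 Cx5 Cy4 Cx1 Cy0; exfalso; lra) | (clear -Sx Cx3 Cx4 Cy3 Cy5 Cx0 Cx2 Cy0; exfalso; lra) ]) | (case: Cy0 => Cy0; [ (clear -Hy2 Sy Lx3 Cx5 Cy4 Cx1 Cx2 Cy0; exfalso; lra) | (clear -Sx Ly2 Cx3 Cx4 Cy3 Cy5 Cx0 Cy0; exfalso; lra) ]) ]) ]) | (clear -Hy1 Hy3 Sy Lx1 Lx3 Cx5 Cy4 Cx0; exfalso; lra) ]) ]) | (clear -Hx5 Sx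 Ly1 Ly2 Cx3 Cx4 Cy3 Cy4; exfalso; lra) ]) ]) ]) | (case: Cx5 => Cx5; [ (case: Cy3 => Cy3; [ (clear -Hy5 Sy Lx1 Lx2 Lx3 Lx5 Cx4 Cy3; exfalso; lra) | (case: Cy4 => Cy4; [ (case: Cy5 => Cy5; [ (case: Cx0 => Cx0; [ (case: Cx1 => Cx1; [ (case: Cx2 => Cx2; [ (clear -Sx Ly5 Cx3 Cx5 Cy3 Cx0 Cx1 Cx2; exfalso; lra) | (case: Cy0 => Cy0; [ (case: Cy1 => Cy1; [ (clear -Sy Lx3 Cx4 Cy4 Cy5 Cx2 Cy0 Cy1; exfalso; lra) | (clear -Sx Ly5 Cx3 Cx5 Cy3 Cx0 Cx1 Cy1; exfalso; lra) ]) | (case: Cy1 => Cy1; [ (clear -Sy Lx3 Lx5 Cx4 Cy4 Cy5 Cx2 Cy1; exfalso; lra) | (clear -Sx Cx3 Cx5 Cy3 Cx0 Cx1 Cy0 Cy1; exfalso; lra) ]) ]) ]) | (case: Cx2 => Cx2; [ (clear -Sx Ly2 Ly5 Cx3 Cx5 Cy3 Cx0 Cx2; exfalso; lra) | (case: Cy0 => Cy0; [ (clear -Hy2 Sy Cx4 Cy4 Cy5 Cx1 Cx2 Cy0; exfalso; lra) | (case: Cy1 => Cy1; [ (clear -Sy Lx3 Cx4 Cy4 Cy5 Cx1 Cx2 Cy1; exfalso; lra) | (clear -Sx Ly2 Cx3 Cx5 Cy3 Cx0 Cy0 Cy1; exfalso; lra) ]) ]) ]) ]) | (case: Cx1 =>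 Cx1; [ (case: Cx2 => Cx2; [ (clear -Sx Ly1 Ly5 Cx3 Cx5 Cy3 Cx1 Cx2; exfalso; lra) | (case: Cy0 => Cy0; [ (clear -Sy Lx3 Cx4 Cy4 Cy5 Cx0 Cx2 Cy0; exfalso; lra) | (case: Cy1 => Cy1; [ (clear -Sy Lx3 Cx4 Cy4 Cy5 Cx0 Cx2 Cy1; exfalso; lra) | (clear -Hx4 Sx Cx3 Cx5 Cy3 Cx1 Cy0 Cy1; exfalso; lra) ]) ]) ]) | (case: Cx2 => Cx2; [ (clear -Sx Ly1 Ly2 Ly5 Cx3 Cx5 Cy3 Cx2; exfalso; lra) | (case: Cy0 => Cy0; [ (clear -Sy Cx4 Cy4 Cy5 Cx0 Cx1 Cx2 Cy0; exfalso; lra) | (case: Cy1 => Cy1; [ (clear -Sy Cx4 Cy4 Cy5 Cx0 Cx1 Cx2 Cy1; exfalso; lra) | (clear -Hx4 Sx Ly2 Cx3 Cx5 Cy3 Cy0 Cy1; exfalso; lra) ]) ]) ]) ]) ]) | (clear -Hx1 Sx Ly1 Ly2 Cx3 Cx5 Cy3 Cy5; exfalso; lra) ]) | (clear -Sx Ly1 Ly2 Ly5 Cx3 Cx5 Cy3 Cy4; exfalso; lra) ]) ]) | (case: Cy3 => Cy3; [ (clear -Hy5 Sy Lx1 Lx2 Lx3 Cx4 Cx5 Cy3; exfalso; lra) | (case: Cy4 => Cy4; [ (clear -Hy5 Sy Lx1 Lx2 Lx3 Cx4 Cx5 Cy4; exfalso; lra) | (clear -Hx5 Sx Ly1 Ly2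 Ly5 Cx3 Cy3 Cy4; exfalso; lra) ]) ]) ]) ]) | (case: Cx4 => Cx4; [ (case: Cx5 => Cx5; [ (case: Cy3 => Cy3; [ (case: Cy4 => Cy4; [ (case: Cy5 => Cy5; [ (case: Cx0 => Cx0; [ (case: Cx1 => Cx1; [ (case: Cx2 => Cx2; [ (case: Cy0 => Cy0; [ (case: Cy1 => Cy1; [ (case: Cy2 => Cy2; [ (clear -Sy Cy3 Cy4 Cy5 Cy0 Cy1 Cy2; exfalso; lra) | (clear -Sx Ly4 Cx4 Cx5 Cx1 Cx2 Cy2; exfalso; lra) ]) | (clear -Sx Ly4 Cx4 Cx5 Cx0 Cx1 Cx2 Cy1; exfalso; lra) ]) | (clear -Sx Ly4 Cx4 Cx5 Cx0 Cx2 Cy0; exfalso; lra) ]) | (case: Cy0 => Cy0; [ (case: Cy1 => Cy1; [ (clear -Sy Cx3 Cy3 Cy4 Cy5 Cx2 Cy0 Cy1; exfalso; lra) | (clear -Sx Ly3 Ly4 Cx4 Cx5 Cx0 Cx1 Cy1; exfalso; lra) ]) | (clear -Sx Ly3 Ly4 Cx4 Cx0 Cx1 Cy0; exfalso; lra) ]) ]) | (clear -Sy Lx0 Lx2 Cx3 Cy3 Cy4 Cy5 Cx1; exfalso; lra) ]) | (case: Cx1 => Cx1; [ (case: Cx2 => Cx2; [ (case: Cy0 => Cy0; [ (clear -Sy Lx2 Cx3 Cy3 Cy4 Cy5 Cx0 Cy0; exfalso; lra) | (clear -Sx Ly1 Ly4 Cx4 Cx5 Cx1 Cx2 Cy0;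 exfalso; lra) ]) | (case: Cy0 => Cy0; [ (clear -Sy Cx3 Cy3 Cy4 Cy5 Cx0 Cx2 Cy0; exfalso; lra) | (case: Cy1 => Cy1; [ (clear -Sy Cx3 Cy3 Cy4 Cy5 Cx0 Cx2 Cy1; exfalso; lra) | (case: Cy2 => Cy2; [ (clear -Sy Cx3 Cy3 Cy4 Cy5 Cx0 Cx2 Cy2; exfalso; lra) | (clear -Sx Ly4 Cx4 Cx5 Cx1 Cy0 Cy1 Cy2; exfalso; lra) ]) ]) ]) ]) | (clear -Sy Lx2 Cx3 Cy3 Cy4 Cy5 Cx0 Cx1; exfalso; lra) ]) ]) | (clear -Hx3 Sx Ly1 Ly2 Ly3 Cx4 Cx5 Cy5; exfalso; lra) ]) | (case: Cy5 => Cy5; [ (case: Cx0 => Cx0; [ (case: Cx1 => Cx1; [ (case: Cx2 => Cx2; [ (case: Cy0 => Cy0; [ (case: Cy1 => Cy1; [ (case: Cy2 => Cy2; [ (clear -Sy Lx5 Cx3 Cy3 Cy5 Cy0 Cy1 Cy2; exfalso; lra) | (clear -Sx Cx4 Cx5 Cy4 Cx1 Cx2 Cy2; exfalso; lra) ]) | (clear -Sx Cx4 Cx5 Cy4 Cx0 Cx1 Cx2 Cy1; exfalso; lra) ]) | (clear -Sx Cx4 Cx5 Cy4 Cx0 Cx2 Cy0; exfalso; lra) ]) | (case: Cy0 => Cy0; [ (case: Cy1 => Cy1; [ (clear -Sy Lx0 Cx3 Cy3 Cy5 Cx2 Cy0 Cy1; exfalso; lra) | (clear -Sx Ly3 Cx4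 Cx5 Cy4 Cx0 Cx1 Cy1; exfalso; lra) ]) | (clear -Sx Ly3 Cx4 Cy4 Cx0 Cx1 Cy0; exfalso; lra) ]) ]) | (clear -Hy4 Sy Lx0 Lx2 Cx3 Cy3 Cy5 Cx1; exfalso; lra) ]) | (case: Cx1 => Cx1; [ (case: Cx2 => Cx2; [ (case: Cy0 => Cy0; [ (case: Cy1 => Cy1; [ (case: Cy2 => Cy2; [ (clear -Sy Cx3 Cy3 Cy5 Cx0 Cy1 Cy2; exfalso; lra) | (clear -Sx Cx4 Cx5 Cy4 Cx1 Cx2 Cy2; exfalso; lra) ]) | (case: Cy2 => Cy2; [ (clear -Sy Lx5 Cy3 Cy5 Cx0 Cy0 Cy2; exfalso; lra) | (clear -Sx Cx4 Cx5 Cy4 Cx1 Cx2 Cy2; exfalso; lra) ]) ]) | (clear -Sx Ly1 Cx4 Cx5 Cy4 Cx1 Cx2 Cy0; exfalso; lra) ]) | (case: Cy0 => Cy0; [ (case: Cy1 => Cy1; [ (clear -Sy Cx3 Cy3 Cy5 Cx0 Cx2 Cy0 Cy1; exfalso; lra) | (case: Cy2 => Cy2; [ (clear -Sy Cx3 Cy3 Cy5 Cx0 Cx2 Cy0 Cy2; exfalso; lra) | (clear -Sx Ly3 Cx4 Cx5 Cy4 Cx1 Cy1 Cy2; exfalso; lra) ]) ]) | (case: Cy1 => Cy1; [ (clear -Hy0 Sy Cx3 Cy3 Cy5 Cx0 Cx2 Cy1; exfalso; lra) | (case: Cy2 => Cy2; [ (clear -Sy Lx1 Cx3 Cy3 Cy5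 Cx0 Cx2 Cy2; exfalso; lra) | (clear -Sx Cx4 Cx5 Cy4 Cx1 Cy0 Cy1 Cy2; exfalso; lra) ]) ]) ]) ]) | (clear -Hy4 Sy Lx2 Cx3 Cy3 Cy5 Cx0 Cx1; exfalso; lra) ]) ]) | (clear -Sx Ly1 Ly2 Ly3 Cx4 Cx5 Cy4 Cy5; exfalso; lra) ]) ]) | (case: Cy4 => Cy4; [ (case: Cy5 => Cy5; [ (case: Cx0 => Cx0; [ (case: Cx1 => Cx1; [ (case: Cx2 => Cx2; [ (clear -Sx Ly4 Cx4 Cx5 Cy3 Cx0 Cx1 Cx2; exfalso; lra) | (case: Cy0 => Cy0; [ (case: Cy1 => Cy1; [ (clear -Sy Lx4 Cx3 Cy4 Cy5 Cx2 Cy0 Cy1; exfalso; lra) | (clear -Sx Ly4 Cx4 Cx5 Cy3 Cx0 Cx1 Cy1; exfalso; lra) ]) | (clear -Sx Ly4 Cx4 Cy3 Cx0 Cx1 Cy0; exfalso; lra) ]) ]) | (clear -Sy Lx0 Lx2 Lx4 Cx3 Cy4 Cy5 Cx1; exfalso; lra) ]) | (case: Cx1 => Cx1; [ (case: Cx2 => Cx2; [ (clear -Hx0 Sx Ly4 Cx4 Cx5 Cy3 Cx1 Cx2; exfalso; lra) | (case: Cy0 => Cy0; [ (clear -Sy Lx4 Cx3 Cy4 Cy5 Cx0 Cx2 Cy0; exfalso; lra) | (case: Cy1 => Cy1; [ (clear -Sy Lx4 Cx3 Cy4 Cy5 Cx0 Cx2 Cy1; exfalso; lra) | (clear -Sx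 Ly4 Cx4 Cx5 Cy3 Cx1 Cy0 Cy1; exfalso; lra) ]) ]) ]) | (clear -Sy Lx2 Lx4 Cx3 Cy4 Cy5 Cx0 Cx1; exfalso; lra) ]) ]) | (clear -Hx3 Sx Ly1 Ly2 Cx4 Cx5 Cy3 Cy5; exfalso; lra) ]) | (case: Cy5 => Cy5; [ (case: Cx0 => Cx0; [ (case: Cx1 => Cx1; [ (case: Cx2 => Cx2; [ (clear -Sx Cx4 Cx5 Cy3 Cy4 Cx0 Cx1 Cx2; exfalso; lra) | (case: Cy0 => Cy0; [ (case: Cy1 => Cy1; [ (clear -Sy Lx0 Lx4 Cx3 Cy5 Cx2 Cy0 Cy1; exfalso; lra) | (clear -Sx Cx4 Cx5 Cy3 Cy4 Cx0 Cx1 Cy1; exfalso; lra) ]) | (clear -Sx Cx4 Cy3 Cy4 Cx0 Cx1 Cy0; exfalso; lra) ]) ]) | (clear -Hy4 Sy Lx0 Lx2 Lx4 Cx3 Cy5 Cx1; exfalso; lra) ]) | (case: Cx1 => Cx1; [ (case: Cx2 => Cx2; [ (clear -Hx0 Sx Cx4 Cx5 Cy3 Cy4 Cx1 Cx2; exfalso; lra) | (case: Cy0 => Cy0; [ (case: Cy1 => Cy1; [ (clear -Sy Lx4 Cx3 Cy5 Cx0 Cx2 Cy0 Cy1; exfalso; lra) | (clear -Sx Ly0 Cx4 Cx5 Cy3 Cy4 Cx1 Cy1; exfalso; lra) ]) | (case: Cy1 => Cy1; [ (clear -Hy0 Sy Lx4 Cx3 Cy5 Cx0 Cx2 Cy1;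 exfalso; lra) | (clear -Sx Cx4 Cx5 Cy3 Cy4 Cx1 Cy0 Cy1; exfalso; lra) ]) ]) ]) | (clear -Hy4 Sy Lx2 Lx4 Cx3 Cy5 Cx0 Cx1; exfalso; lra) ]) ]) | (clear -Sx Ly1 Ly2 Cx4 Cx5 Cy3 Cy4 Cy5; exfalso; lra) ]) ]) ]) | (case: Cy3 => Cy3; [ (case: Cy4 => Cy4; [ (case: Cy5 => Cy5; [ (clear -Sy Lx1 Lx2 Cx3 Cx5 Cy3 Cy4 Cy5; exfalso; lra) | (case: Cx0 => Cx0; [ (case: Cx1 => Cx1; [ (clear -Hx2 Hx3 Sx Ly3 Cx4 Cy5 Cx0 Cx1; exfalso; lra) | (case: Cx2 => Cx2; [ (case: Cy0 => Cy0; [ (clear -Sy Lx2 Cx3 Cx5 Cy3 Cy4 Cx1 Cy0; exfalso; lra) | (clear -Sx Ly3 Ly4 Cx4 Cy5 Cx0 Cx2 Cy0; exfalso; lra) ]) | (case: Cy0 => Cy0; [ (clear -Sy Cx3 Cx5 Cy3 Cy4 Cx1 Cx2 Cy0; exfalso; lra) | (clear -Sx Ly2 Ly3 Ly4 Cx4 Cy5 Cx0 Cy0; exfalso; lra) ]) ]) ]) | (clear -Hy1 Sy Lx1 Cx3 Cx5 Cy3 Cy4 Cx0; exfalso; lra) ]) ]) | (case: Cy5 => Cy5; [ (clear -Hy1 Sy Lx1 Lx2 Cx3 Cx5 Cy3 Cy5; exfalso; lra) | (clear -Hx5 Sx Ly1 Ly2 Ly3 Cx4 Cy4 Cy5; exfalso;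 lra) ]) ]) | (case: Cy4 => Cy4; [ (case: Cy5 => Cy5; [ (clear -Hy3 Sy Lx1 Lx2 Cx3 Cx5 Cy4 Cy5; exfalso; lra) | (case: Cx0 => Cx0; [ (case: Cx1 => Cx1; [ (clear -Hx2 Hx3 Sx Cx4 Cy3 Cy5 Cx0 Cx1; exfalso; lra) | (case: Cx2 => Cx2; [ (case: Cy0 => Cy0; [ (clear -Hy2 Sy Lx2 Cx3 Cx5 Cy4 Cx1 Cy0; exfalso; lra) | (clear -Sx Ly4 Cx4 Cy3 Cy5 Cx0 Cx2 Cy0; exfalso; lra) ]) | (case: Cy0 => Cy0; [ (clear -Hy2 Sy Cx3 Cx5 Cy4 Cx1 Cx2 Cy0; exfalso; lra) | (clear -Sx Ly2 Ly4 Cx4 Cy3 Cy5 Cx0 Cy0; exfalso; lra) ]) ]) ]) | (clear -Hy1 Hy3 Sy Lx1 Cx3 Cx5 Cy4 Cx0; exfalso; lra) ]) ]) | (case: Cy5 => Cy5; [ (clear -Hy1 Hy3 Sy Lx1 Lx2 Cx3 Cx5 Cy5; exfalso; lra) | (clear -Sx Ly0 Ly1 Ly2 Cx4 Cy3 Cy4 Cy5; exfalso; lra) ]) ]) ]) ]) | (case: Cx5 => Cx5; [ (case: Cy3 => Cy3; [ (clear -Hy5 Sy Lx1 Lx2 Lx5 Cx3 Cx4 Cy3; exfalso; lra) | (case: Cy4 => Cy4; [ (case: Cy5 => Cy5; [ (case: Cx0 => Cx0; [ (case: Cx1 => Cx1; [ (case: Cx2 => Cx2; [ (clear -Hx4 Sx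 Ly4 Cx5 Cy3 Cx0 Cx1 Cx2; exfalso; lra) | (case: Cy0 => Cy0; [ (case: Cy1 => Cy1; [ (clear -Sy Cx3 Cx4 Cy4 Cy5 Cx2 Cy0 Cy1; exfalso; lra) | (clear -Sx Ly4 Ly5 Cx5 Cy3 Cx0 Cx1 Cy1; exfalso; lra) ]) | (case: Cy1 => Cy1; [ (clear -Sy Lx5 Cx3 Cx4 Cy4 Cy5 Cx2 Cy1; exfalso; lra) | (clear -Sx Ly4 Cx5 Cy3 Cx0 Cx1 Cy0 Cy1; exfalso; lra) ]) ]) ]) | (clear -Sy Lx0 Lx2 Cx3 Cx4 Cy4 Cy5 Cx1; exfalso; lra) ]) | (case: Cx1 => Cx1; [ (case: Cx2 => Cx2; [ (clear -Hx0 Hx4 Sx Ly4 Cx5 Cy3 Cx1 Cx2; exfalso; lra) | (case: Cy0 => Cy0; [ (clear -Sy Cx3 Cx4 Cy4 Cy5 Cx0 Cx2 Cy0; exfalso; lra) | (case: Cy1 => Cy1; [ (clear -Sy Cx3 Cx4 Cy4 Cy5 Cx0 Cx2 Cy1; exfalso; lra) | (clear -Hx4 Sx Ly4 Cx5 Cy3 Cx1 Cy0 Cy1; exfalso; lra) ]) ]) ]) | (clear -Sy Lx2 Cx3 Cx4 Cy4 Cy5 Cx0 Cx1; exfalso; lra) ]) ]) | (clear -Hx1 Hx3 Sx Ly1 Ly2 Cx5 Cy3 Cy5; exfalso; lra) ]) | (case: Cy5 => Cy5; [ (case: Cx0 => Cx0; [ (case: Cx1 => Cx1; [ (case: Cx2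 => Cx2; [ (clear -Hx4 Sx Cx5 Cy3 Cy4 Cx0 Cx1 Cx2; exfalso; lra) | (case: Cy0 => Cy0; [ (case: Cy1 => Cy1; [ (clear -Sy Lx0 Cx3 Cx4 Cy5 Cx2 Cy0 Cy1; exfalso; lra) | (clear -Sx Ly5 Cx5 Cy3 Cy4 Cx0 Cx1 Cy1; exfalso; lra) ]) | (case: Cy1 => Cy1; [ (clear -Hy0 Sy Lx0 Cx3 Cx4 Cy5 Cx2 Cy1; exfalso; lra) | (clear -Sx Cx5 Cy3 Cy4 Cx0 Cx1 Cy0 Cy1; exfalso; lra) ]) ]) ]) | (clear -Hy4 Sy Lx0 Lx2 Cx3 Cx4 Cy5 Cx1; exfalso; lra) ]) | (case: Cx1 => Cx1; [ (case: Cx2 => Cx2; [ (clear -Hx0 Hx4 Sx Cx5 Cy3 Cy4 Cx1 Cx2; exfalso; lra) | (case: Cy0 => Cy0; [ (case: Cy1 => Cy1; [ (clear -Sy Cx3 Cx4 Cy5 Cx0 Cx2 Cy0 Cy1; exfalso; lra) | (clear -Hx4 Sx Ly0 Cx5 Cy3 Cy4 Cx1 Cy1; exfalso; lra) ]) | (case: Cy1 => Cy1; [ (clear -Hy0 Sy Cx3 Cx4 Cy5 Cx0 Cx2 Cy1; exfalso; lra) | (clear -Hx4 Sx Cx5 Cy3 Cy4 Cx1 Cy0 Cy1; exfalso; lra) ]) ]) ]) | (clear -Hy4 Sy Lx2 Cx3 Cx4 Cy5 Cx0 Cx1; exfalso; lra) ]) ]) | (clear -Hx1 Sx Ly1 Ly2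 Cx5 Cy3 Cy4 Cy5; exfalso; lra) ]) ]) ]) | (clear -Hy1 Sy Lx0 Lx1 Lx2 Cx3 Cx4 Cx5; exfalso; lra) ]) ]) ]).
Qed.

Lemma core2 (R : realFieldType) (x0 x1 x2 x3 x4 x5 y0 y1 y2 y3 y4 y5 v w cx0 cx1 cx2 cx3 cx4 cx5 cy0 cy1 cy2 cy3 cy4 cy5 : R)
  (Hx0 : 0 <= x0)
  (Hx1 : 0 <= x1)
  (Hx2 : 0 <= x2)
  (Hx3 : 0 <= x3)
  (Hx4 : 0 <= x4)
  (Hx5 : 0 <= x5)
  (Sx : x0 + x1 + x2 + x3 + x4 + x5 = 1)
  (Hy0 : 0 <= y0)
  (Hy1 : 0 <= y1)
  (Hy2 : 0 <= y2)
  (Hy3 : 0 <= y3)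
  (Hy4 : 0 <= y4)
  (Hy5 : 0 <= y5)
  (Sy : y0 + y1 + y2 + y3 + y4 + y5 = 1)
  (Ex0 : cx0 = (-3) * y1 + 1 * y2 + (-1) * y3 + (-1) * y4 + (-1) * y5)
  (Lx0 : cx0 <= v)
  (Cx0 : x0 = 0 \/ cx0 = v)
  (Ex1 : cx1 = 1 * y0 + (-3) * y2 + (-1) * y3 + (-1) * y4 + (-1) * y5)
  (Lx1 : cx1 <= v)
  (Cx1 : x1 = 0 \/ cx1 = v)
  (Ex2 : cx2 = (-3) * y0 + 1 * y1 + (-1) * y3 + (-1) * y4 + (-1) * y5)
  (Lx2 : cx2 <= v)
  (Cx2 : x2 = 0 \/ cx2 = v)
  (Ex3 : cx3 = (-4) * y0 + (-4) * y1 + 3 * y2 + (-5) * y4 + 1 * y5)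
  (Lx3 : cx3 <= v)
  (Cx3 : x3 = 0 \/ cx3 = v)
  (Ex4 : cx4 = (-1) * y0 + (-1) * y1 + (-3) * y2 + 1 * y3 + (-5) * y5)
  (Lx4 : cx4 <= v)
  (Cx4 : x4 = 0 \/ cx4 = v)
  (Ex5 : cx5 = (-1) * y0 + (-1) * y1 + (-3) * y2 + (-5) * y3 + 1 * y4)
  (Lx5 : cx5 <= v)
  (Cx5 : x5 = 0 \/ cx5 = v)
  (Ey0 : cy0 = (-3) * x1 + 1 * x2 + (-1) * x3 + (-1) * x4 + (-1) * x5)
  (Ly0 : cy0 <= w)
  (Cy0 : y0 = 0 \/ cy0 = w)
  (Ey1 : cy1 = 1 * x0 + (-3) * x2 + (-1) * x3 + (-1) * x4 + (-1) * x5)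
  (Ly1 : cy1 <= w)
  (Cy1 : y1 = 0 \/ cy1 = w)
  (Ey2 : cy2 = (-3) * x0 + 1 * x1 + (-1) * x3 + (-1) * x4 + (-1) * x5)
  (Ly2 : cy2 <= w)
  (Cy2 : y2 = 0 \/ cy2 = w)
  (Ey3 : cy3 = (-4) * x0 + (-4) * x1 + 3 * x2 + (-5) * x4 + 1 * x5)
  (Ly3 : cy3 <= w)
  (Cy3 : y3 = 0 \/ cy3 = w)
  (Ey4 : cy4 = (-1) * x0 + (-1) * x1 + (-3) * x2 + 1 * x3 + (-5) * x5)
  (Ly4 : cy4 <= w)
  (Cy4 : y4 = 0 \/ cy4 = w)
  (Ey5 : cy5 = (-1) * x0 + (-1) * x1 + (-3) * x2 + (-5) * x3 + 1 * x4)
  (Ly5 : cy5 <= w)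
  (Cy5 : y5 = 0 \/ cy5 = w) :
  x0 = 3^-1 /\ x1 = 3^-1 /\ x2 = 3^-1 /\ x3 = 0 /\ x4 = 0 /\ x5 = 0 /\ y0 = 3^-1 /\ y1 = 3^-1 /\ y2 = 3^-1 /\ y3 = 0 /\ y4 = 0 /\ y5 = 0.
Proof. subst. by apply: (@core R x0 x1 x2 x3 x4 x5 y0 y1 y2 y3 y4 y5 v w). Qed.

Lemma sum6 (R : realFieldType) (f : 'I_6 -> R) : \sum_(i < 6) f i =
  f (inord 0) + f (inord 1) + f (inord 2) + f (inord 3) + f (inord 4) + f (inord 5).
Proof.
rewrite !big_ord_recr big_ord0 /= add0r.
by congr (_+_+_+_+_+_); congr f; apply: val_inj; rewrite /= inordK.
Qed.

Lemma Umul (R : realFieldType) (y : 'cV[R]_6) (i : nat) : (i < 6)%N ->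
  (Umx R *m y) (inord i) 0 = \sum_(j < 6) ((nth [::] Ulist i)`_j)%:~R * y j 0.
Proof. by move=> hi; rewrite mxE; apply: eq_bigr => j _; rewrite mxE inordK. Qed.

Definition ek (R : realFieldType) (k : 'I_6) : 'cV[R]_6 := \col_(i < 6) ((i == k)%:R).

Lemma ek_mixed (R : realFieldType) k : mixed_strategy (ek R k).
Proof.
split=> [i|]; first by rewrite mxE ler0n.
rewrite (bigD1 k) //= mxE eqxx big1 ?addr0 // => i /negbTE ne.
by rewrite mxE ne.
Qed.

Lemma payoff_ek (R : realFieldType) (A : 'M[R]_6) k y :
  payoff A (ek R k) y = (A *m y) k 0.
Proof.
rewrite /payoff (bigD1 k) //= mxE eqxx mul1r big1 ?addr0 // => i /negbTE ne.
by rewrite mxE ne mul0r.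
Qed.

Lemma compl (R : realFieldType) (x c : 'I_6 -> R) :
  (forall i, 0 <= x i) -> \sum_i x i = 1 ->
  (forall k, c k <= \sum_i x i * c i) ->
  forall i, x i = 0 \/ c i = \sum_i x i * c i.
Proof.
move=> x0 s1 le i; set v := \sum_i x i * c i in le *.
have h : \sum_i x i * (v - c i) = 0.
  under eq_bigr => j _ do rewrite mulrBr.
  by rewrite sumrB -mulr_suml s1 mul1r subrr.
have p0 : forall j : 'I_6, true -> 0 <= x j * (v - c j).
  by move=> j _; rewrite mulr_ge0 // subr_ge0.
have h2 := psumr_eq0P p0 h.
have /eqP := h2 i isT.
rewrite mulf_eq0 => /orP [/eqP -> | ]; first by left.
by rewrite subr_eq0 => /eqP ->; right.
Qed.

Lemma best (R : realFieldType) (x y : 'cV[R]_6) :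
  mixed_strategy x ->
  (forall x', mixed_strategy x' -> payoff (Umx R) x' y <= payoff (Umx R) x y) ->
  (forall k, (Umx R *m y) k 0 <= payoff (Umx R) x y) /\
  (forall k, x k 0 = 0 \/ (Umx R *m y) k 0 = payoff (Umx R) x y).
Proof.
move=> [h0 h1] B.
have L : forall k, (Umx R *m y) k 0 <= payoff (Umx R) x y.
  by move=> k; rewrite -payoff_ek; apply: B; apply: ek_mixed.
split=> // k; exact: (@compl R (fun i => x i 0) (fun i => (Umx R *m y) i 0) h0 h1 L).
Qed.

Lemma n123E (R : realFieldType) (i : nat) : (i < 6)%N ->
  n123 R (inord i) 0 = if (i < 3)%N then 3^-1 else 0.
Proof. by move=> hi; rewrite mxE inordK. Qed.

Lemma ord6 (R : realFieldType) (z : 'cV[R]_6) (a0 a1 a2 a3 a4 a5 : R) :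
   z (inord 0) 0 = a0 -> z (inord 1) 0 = a1 -> z (inord 2) 0 = a2 ->
   z (inord 3) 0 = a3 -> z (inord 4) 0 = a4 -> z (inord 5) 0 = a5 ->
   z = \col_(i < 6) [:: a0; a1; a2; a3; a4; a5]`_i.
Proof.
move=> h0 h1 h2 h3 h4 h5; apply/matrixP => i j.
  rewrite !ord1 mxE.
  case: i => [[|[|[|[|[|[|i]]]]]] hi] //=.
  all: first [by move: hi; rewrite !ltnS ltn0 | rewrite -h0 | rewrite -h1 | rewrite -h2 | rewrite -h3 | rewrite -h4 | rewrite -h5]; apply: (congr1 (fun k => z k 0)); apply: ord_inj; by rewrite inordK.
Qed.

Theorem proposition3 (R : realFieldType) :
  is_Nash (Umx R) (n123 R) (n123 R) /\
  (forall x y : 'cV[R]_6, is_Nash (Umx R) x y -> x = n123 R /\ y = n123 R).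
Proof.
have nm : mixed_strategy (n123 R).
  split=> [i|]; first by rewrite mxE; case: ifP => _; rewrite ?invr_ge0 ?ler0n.
  by rewrite sum6 !n123E //=; lra.
have nb : forall x', mixed_strategy x' -> payoff (Umx R) x' (n123 R) <= payoff (Umx R) (n123 R) (n123 R).
  move=> x' [h0 h1]; move: h1; rewrite /payoff !sum6 !Umul // !sum6 !inordK //= !n123E //=.
  have := h0 (inord 0); have := h0 (inord 1); have := h0 (inord 2);
  have := h0 (inord 3); have := h0 (inord 4); have := h0 (inord 5).
  lra.
split; first by split; [|split; [|split]].
move=> x y [mx [my [Bx By]]].
have [Lx Cx] := @best R x y mx Bx.
have [Ly Cy] := @best R y x my By.
case: mx => hx sx; case: my => hy sy.
rewrite sum6 in sx; rewrite sum6 in sy.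
move: (payoff (Umx R) x y) Lx Cx => v Lx Cx.
move: (payoff (Umx R) y x) Ly Cy => w Ly Cy.
have [e0 [e1 [e2 [e3 [e4 [e5 [f0 [f1 [f2 [f3 [f4 f5]]]]]]]]]]] :=
  @core2 R (x (inord 0) 0) (x (inord 1) 0) (x (inord 2) 0) (x (inord 3) 0) (x (inord 4) 0) (x (inord 5) 0) (y (inord 0) 0) (y (inord 1) 0) (y (inord 2) 0) (y (inord 3) 0) (y (inord 4) 0) (y (inord 5) 0) v w ((Umx R *m y) (inord 0) 0) ((Umx R *m y) (inord 1) 0) ((Umx R *m y) (inord 2) 0) ((Umx R *m y) (inord 3) 0) ((Umx R *m y) (inord 4) 0) ((Umx R *m y) (inord 5) 0) ((Umx R *m x) (inord 0) 0) ((Umx R *m x) (inord 1) 0) ((Umx R *m x) (inord 2) 0) ((Umx R *m x) (inord 3) 0) ((Umx R *m x) (inord 4) 0) ((Umx R *m x) (inord 5) 0)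
    (hx _) (hx _) (hx _) (hx _) (hx _) (hx _) sx
    (hy _) (hy _) (hy _) (hy _) (hy _) (hy _) sy
   (ltac:(rewrite Umul // sum6 !inordK //=; lra)) (Lx _) (Cx _)
   (ltac:(rewrite Umul // sum6 !inordK //=; lra)) (Lx _) (Cx _)
   (ltac:(rewrite Umul // sum6 !inordK //=; lra)) (Lx _) (Cx _)
   (ltac:(rewrite Umul // sum6 !inordK //=; lra)) (Lx _) (Cx _)
   (ltac:(rewrite Umul // sum6 !inordK //=; lra)) (Lx _) (Cx _)
   (ltac:(rewrite Umul // sum6 !inordK //=; lra)) (Lx _) (Cx _)
   (ltac:(rewrite Umul // sum6 !inordK //=; lra)) (Ly _) (Cy _)
   (ltac:(rewrite Umul // sum6 !inordK //=; lra)) (Ly _) (Cy _)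
   (ltac:(rewrite Umul // sum6 !inordK //=; lra)) (Ly _) (Cy _)
   (ltac:(rewrite Umul // sum6 !inordK //=; lra)) (Ly _) (Cy _)
   (ltac:(rewrite Umul // sum6 !inordK //=; lra)) (Ly _) (Cy _)
   (ltac:(rewrite Umul // sum6 !inordK //=; lra)) (Ly _) (Cy _).
have nE : n123 R = \col_(i < 6) [:: 3^-1; 3^-1; 3^-1; 0; 0; 0]`_i.
  by apply: ord6; rewrite n123E.
by rewrite nE; split; apply: ord6.
Qed.
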